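(* Let $\omega>0$, $\bar r>0$, $\bar v>0$ and $T>0$ be such that $e^{AT}\begin{bmatrix}-\bar r\\ \bar v\end{bmatrix}=\begin{bmatrix}\bar r\\ \bar v\end{bmatrix}$ with $A=\begin{bmatrix}0&1\\ \omega^2&0\end{bmatrix}$ (so that $\bar v/\omega-\bar r>0$ and $e^{\omega T}=\frac{\bar v/\omega+\bar r}{\bar v/\omega-\bar r}$). For $\varepsilon_p\in\mathbb R$ define $$\eta(\varepsilon_p)=\frac{\varepsilon_p-\bar r+\sqrt{\varepsilon_p^2-2\bar r\varepsilon_p+(\bar v/\omega)^2}}{\bar v/\omega-\bar r},\quad \delta_1(\varepsilon_p)=\bar r\Big(\eta(\varepsilon_p)+\tfrac1{\eta(\varepsilon_p)}-2\Big),\quad \delta_2(\varepsilon_p)=\bar r\omega\Big(\tfrac1{\eta(\varepsilon_p)}-\eta(\varepsilon_p)\Big),$$ $\varepsilon_p^+=\varepsilon_p+\delta_1(\varepsilon_p)$, $\delta_\alpha(\varepsilon_p)=e^{-2\alpha T}\varepsilon_p^+-\varepsilon_p$, and $\xi=\dfrac{\bar r\omega}{\bar v/\omega-\bar r}$. Then for all $\varepsilon_p\in\mathbb R$, $$|\delta_1(\varepsilon_p)|\le\frac{2\xi}{\omega}|\varepsilon_p|,\qquad |\delta_2(\varepsilon_p)|\le 2\xi|\varepsilon_p|,$$ and, for every $\alpha>\omega$, $$|\delta_\alpha(\varepsilon_p)|\le\big(1-e^{-(\omega+2\alpha)T}\big)|\varepsilon_p|.$$ *)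

(* Defs.v *)
From HB Require Import structures.
From mathcomp Require Import all_boot all_order all_algebra.
From mathcomp Require Import all_classical all_reals all_analysis.
Set Implicit Arguments. Unset Strict Implicit. Unset Printing Implicit Defensive.
Import Order.TTheory GRing.Theory Num.Theory.
Import numFieldNormedType.Exports.
Local Open Scope ring_scope.

Definition mexp (R : realType) (n : nat) (A : 'M[R]_n.+1) : 'M[R]_n.+1 :=
  \matrix_(i, j) limn (series (fun k : nat => (((k`!%:R)^-1 *: A ^+ k) i j : R))).

Definition col2 (R : realType) (a b : R) : 'cV[R]_2 :=
  \col_(i < 2) (if i == 0 then a else b).

Definition Amat (R : realType) (w : R) : 'M[R]_2 :=
  \matrix_(i < 2, j < 2)
    (if (i == 0) && (j == 1) then 1
     else if (i == 1) && (j == 0) then w ^+ 2 else 0).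

Section Quantities.
Variables (R : realType) (w rb vb T : R).

Definition eta (e : R) : R :=
  (e - rb + Num.sqrt (e ^+ 2 - 2 * rb * e + (vb / w) ^+ 2)) / (vb / w - rb).
Definition delta1 (e : R) : R := rb * (eta e + (eta e)^-1 - 2).
Definition delta2 (e : R) : R := rb * w * ((eta e)^-1 - eta e).
Definition eps_plus (e : R) : R := e + delta1 e.
Definition delta_alpha (a e : R) : R := expR (- (2 * a * T)) * eps_plus e - e.
Definition xi : R := rb * w / (vb / w - rb).
End Quantities.

(* Main.v *)
Require Import Defs.
From HB Require Import structures.
From mathcomp Require Import all_boot all_order all_algebra.
From mathcomp Require Import all_classical all_reals all_analysis.
From mathcomp Require Import ring lra.
Import Order.TTheory GRing.Theory Num.Theory.
Set Implicit Arguments. Unset Strict Implicit.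
Import numFieldNormedType.Exports.
Local Open Scope ring_scope.
Local Open Scope classical_set_scope.

Definition Pm (R : realType) (w x : R) (k : nat) : 'M[R]_2 :=
  \matrix_(i < 2, j < 2)
   (if i == 0 then (if j == 0 then (x ^+ k + (- x) ^+ k) / 2 else (x ^+ k - (- x) ^+ k) / (2 * w))
    else (if j == 0 then w * (x ^+ k - (- x) ^+ k) / 2 else (x ^+ k + (- x) ^+ k) / 2)).

Lemma powA (R : realType) (w T : R) (hw : w != 0) k :
  (T *: Amat w) ^+ k = Pm w (T * w) k.
Proof.
elim: k => [|k IH].
  rewrite expr0; apply/matrixP => i j; rewrite !mxE.
  case: i => [[|[|i]] Hi]; case: j => [[|[|j]] Hj] //=; try field; by [].
rewrite exprSr IH; apply/matrixP => i j; rewrite !mxE !big_ord_recl big_ord0 !mxE /=.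
case: i => [[|[|i]] Hi]; case: j => [[|[|j]] Hj] //=; rewrite !exprS; try field; by [].
Qed.
Lemma lim_comb (R : realType) (a b : nat -> R) (la lb p q : R) :
  series a @ \oo --> la -> series b @ \oo --> lb ->
  limn (series (fun k => p * a k + q * b k)) = p * la + q * lb.
Proof.
move=> Ha Hb.
have -> : series (fun k => p * a k + q * b k) = (fun n => p * series a n + q * series b n).
  by apply/funext => n; rewrite /series /= big_split /= -!mulr_sumr.
apply: cvg_lim => //; apply: cvgD; apply: cvgMr => //.
Qed.

Lemma expcvg (R : realType) (x : R) : series (exp_coeff x) @ \oo --> expR x.
Proof. exact: is_cvg_series_exp_coeff. Qed.

Lemma mexp0 (R : realType) (w T : R) (hw : w != 0) :
  mexp (T *: Amat w) 0 0 = 2^-1 * expR (T * w) + 2^-1 * expR (- (T * w)) /\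
  mexp (T *: Amat w) 0 1 = (2 * w)^-1 * expR (T * w) + (- (2 * w)^-1) * expR (- (T * w)).
Proof.
split; rewrite /mexp mxE.
  rewrite (_ : (fun k : nat => _) = (fun k => 2^-1 * exp_coeff (T * w) k + 2^-1 * exp_coeff (- (T * w)) k)).
    by apply: lim_comb; apply: expcvg.
  by apply/funext => k; rewrite powA // !mxE /exp_coeff /=; field.
rewrite (_ : (fun k : nat => _) = (fun k => (2 * w)^-1 * exp_coeff (T * w) k + (- (2 * w)^-1) * exp_coeff (- (T * w)) k)).
  by apply: lim_comb; apply: expcvg.
apply/funext => k; rewrite powA // !mxE /exp_coeff /=; field; rewrite hw andbT pnatr_eq0 -lt0n fact_gt0 //.
Qed.
Lemma core (R : realType) (w rb c ex e : R)
  (hw : 0 < w) (hr : 0 < rb) (hc : rb < c) (hex1 : 1 <= ex) (hdex : (c - rb) * ex = c + rb) :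
  let s := Num.sqrt (e ^+ 2 - 2 * rb * e + c ^+ 2) in
  let eta := (e - rb + s) / (c - rb) in
  let g := eta + eta^-1 - 2 in
  let u := eta - eta^-1 in
  0 < eta /\ 0 <= g /\ g <= `|u| /\ (c - rb) * `|u| <= 2 * `|e| /\
  (0 <= e -> e + rb * g <= ex * e) /\ (e < 0 -> ex * (e + rb * g) <= e) /\
  rb * w * (eta^-1 - eta) = - (rb * w * u).
Proof.
move=> s eta g u.
have hd : 0 < c - rb by lra.
have hs0 : 0 <= s by apply: sqrtr_ge0.
have hs2 : s ^+ 2 = e ^+ 2 - 2 * rb * e + c ^+ 2.
  have hq : 0 < c ^+ 2 - rb ^+ 2 by rewrite subr_sqr mulr_gt0 //; lra.
  rewrite /s sqr_sqrtr //.
  rewrite (_ : e ^+ 2 - 2 * rb * e + c ^+ 2 = (e - rb) ^+ 2 + (c ^+ 2 - rb ^+ 2)); last by ring.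
  by rewrite addr_ge0 ?sqr_ge0 // ltW.
have hq : 0 < c ^+ 2 - rb ^+ 2 by rewrite subr_sqr mulr_gt0 //; lra.
have hy : 0 < e - rb + s.
  case: (ltrP 0 (e - rb + s)) => // hn; exfalso.
  have h1 : s <= rb - e by lra.
  have h2 : s ^+ 2 <= (rb - e) ^+ 2 by rewrite ler_sqr ?nnegrE //; lra.
  nra.
have heta : 0 < eta by rewrite /eta divr_gt0.
have hde : (c - rb) * eta = e - rb + s by rewrite /eta mulrC divfK // gt_eqF.
set i := eta^-1.
have hi : eta * i = 1 by rewrite /i mulfV // gt_eqF.
have hi0 : 0 < i by rewrite /i invr_gt0.
have hid : (c - rb) * eta ^+ 2 - 2 * eta * (e - rb) = c + rb.
  apply: (mulfI (lt0r_neq0 hd)).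
  rewrite (_ : (c - rb) * ((c - rb) * eta ^+ 2 - 2 * eta * (e - rb)) =
     ((c - rb) * eta) ^+ 2 - 2 * ((c - rb) * eta) * (e - rb)); last by ring.
  rewrite hde; nra.
have F3 : 2 * e = c * u - rb * g.
  have : (c - rb) * eta - 2 * (e - rb) = (c + rb) * i.
    rewrite -hid /i; field; exact: lt0r_neq0.
  rewrite /u /g -/i; lra.
have hg0 : 0 <= g.
  rewrite (_ : g = (eta - 1) ^+ 2 * i); first by rewrite mulr_ge0 ?sqr_ge0 // ltW.
  rewrite /g /i; field; exact: lt0r_neq0.
split => //; split => //.
case: (lerP 1 eta) => he1.
  have hi1 : i <= 1 by nra.
  have hu0 : 0 <= u by rewrite /u -/i; lra.
  have hgu : g <= u by rewrite /g /u -/i; lra.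
  have he0 : 0 <= e by nra.
  rewrite (ger0_norm hu0) (ger0_norm he0).
  split => //; split; first by nra.
  have h1 : (c - rb) * u <= 2 * e by nra.
  split.
    move=> _.
    have h3 : (c - rb) * (rb * g) <= rb * (2 * e).
      apply: (le_trans (y := rb * ((c - rb) * u))); last by apply: ler_wpM2l; [exact: ltW | exact: h1].
      rewrite mulrA (mulrC (c - rb)) -mulrA; apply: ler_wpM2l; first exact: ltW.
      by apply: ler_wpM2l; [exact: ltW | exact: hgu].
    rewrite -(ler_pM2l hd) mulrA hdex; nra.
  split; first by lra.
  rewrite /u -/i; ring.
have hi1 : 1 < i by nra.
have hu0 : u < 0 by rewrite /u -/i; lra.
have hgu : g <= - u by rewrite /g /u -/i; lra.
have he0 : e < 0 by nra.
rewrite (ltr0_norm hu0) (ltr0_norm he0).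
split => //; split; first by nra.
split; first by lra.
split.
  move=> _.
  have h1 : (c + rb) * g <= - (2 * e) by nra.
  have h3 : ex * (c - rb) * (e + rb * g) <= (c - rb) * e.
    rewrite (mulrC ex) hdex.
    nra.
  rewrite -(ler_pM2l hd) mulrA (mulrC (c - rb)); exact: h3.
rewrite /u -/i; ring.
Qed.

Theorem lemma2 (R : realType) (w rb vb T : R)
  (hw : 0 < w) (hr : 0 < rb) (hv : 0 < vb) (hT : 0 < T)
  (hexp : mexp (T *: Amat w) *m col2 (- rb) vb = col2 rb vb) :
  forall e : R,
    `|delta1 w rb vb e| <= 2 * xi w rb vb / w * `|e| /\
    `|delta2 w rb vb e| <= 2 * xi w rb vb * `|e| /\
    (forall a : R, w < a ->
       `|delta_alpha w rb vb T a e| <= (1 - expR (- ((w + 2 * a) * T))) * `|e|).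
Proof.
move=> e.
have hw0 : w != 0 := lt0r_neq0 hw.
have [E0 E1] := mexp0 T hw0.
have H := congr1 (fun X : 'M[R]_(2,1) => X 0 0) hexp.
rewrite /= mxE big_ord_recl big_ord1 in H.
rewrite (_ : lift ord0 ord0 = 1 :> 'I_2) in H; last by apply: val_inj.
rewrite E0 E1 /col2 !mxE /= in H.
rewrite expRN in H.
set ex := expR (T * w) in H.
have hex0 : 0 < ex by apply: expR_gt0.
have Hq : (ex + 1) * ((vb / w - rb) * ex - (vb / w + rb)) = 0.
  rewrite (_ : (ex + 1) * ((vb / w - rb) * ex - (vb / w + rb)) =
     (2 * ex) * ((2^-1 * ex + 2^-1 * ex^-1) * - rb +
    ((2 * w)^-1 * ex + - (2 * w)^-1 * ex^-1) * vb - rb)); last first.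
    by field; rewrite hw0 (lt0r_neq0 hex0).
  by rewrite H subrr mulr0.
have hdex : (vb / w - rb) * ex = vb / w + rb.
  move/eqP: Hq; rewrite mulf_eq0 => /orP [/eqP h|]; first by exfalso; lra.
  by rewrite subr_eq0 => /eqP.
have hcw : 0 < vb / w by rewrite divr_gt0.
have hc : rb < vb / w by nra.
have hex1 : 1 <= ex by nra.
have := core e hw hr hc hex1 hdex.
move=> /= [heta [hg0 [hgu [hdu [hpos [hneg hd2]]]]]].
rewrite /delta_alpha /eps_plus /delta1 /delta2 /xi /Defs.eta.
set s := Num.sqrt _ in heta hg0 hgu hdu hpos hneg hd2 *.
set et := (e - rb + s) / (vb / w - rb) in heta hg0 hgu hdu hpos hneg hd2 *.
set g := et + et^-1 - 2 in heta hg0 hgu hdu hpos hneg hd2 *.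
set u := et - et^-1 in heta hg0 hgu hdu hpos hneg hd2 *.
set c := vb / w in hc hcw hdex hdu hpos hneg hd2 *.
have hd : 0 < c - rb by lra.
have hd0 : c - rb != 0 by apply: lt0r_neq0.
have key : g <= 2 * `|e| / (c - rb).
  rewrite ler_pdivlMr //.
  apply: (le_trans (y := `|u| * (c - rb))); last by rewrite mulrC.
  by rewrite ler_wpM2r // ltW.
have key2 : `|u| <= 2 * `|e| / (c - rb).
  by rewrite ler_pdivlMr // mulrC.
split.
  rewrite ger0_norm; last by rewrite mulr_ge0 // ltW.
  rewrite (_ : 2 * (rb * w / (c - rb)) / w * `|e| = rb * (2 * `|e| / (c - rb))); last by field; rewrite hw0 hd0.
  by rewrite ler_wpM2l // ltW.
split.
  rewrite hd2 normrN normrM ger0_norm; last by rewrite mulr_ge0 // ltW.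
  rewrite (_ : 2 * (rb * w / (c - rb)) * `|e| = rb * w * (2 * `|e| / (c - rb))); last by field.
  by rewrite ler_wpM2l // mulr_ge0 // ltW.
move=> a ha.
rewrite (_ : - ((w + 2 * a) * T) = - (2 * a * T) + - (T * w)); last by ring.
rewrite expRD (expRN (T * w)) -/ex.
set k := expR (- (2 * a * T)).
have hk0 : 0 < k by apply: expR_gt0.
have hk1 : k < 1 by rewrite expR_lt1; nra.
have hkex : k * ex < 1 by rewrite /k /ex -expRD expR_lt1; nra.
set j := ex^-1.
have hj : ex * j = 1 by rewrite /j mulfV // lt0r_neq0.
have hj0 : 0 < j by rewrite /j invr_gt0.
have hj1 : j <= 1 by nra.
have hkj : k * j <= k by nra.
case: (lerP 0 e) => he.
  have h1 := hpos he.
  have hge : 0 <= k * (rb * g) by rewrite mulr_ge0 // ?mulr_ge0 // ltW.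
  have hkje : k * j * e <= k * e by apply: ler_wpM2r.
  have hkje1 : k * j * e <= e.
    rewrite -[X in _ <= X]mul1r; apply: ler_wpM2r => //; exact: (le_trans hkj (ltW hk1)).
  have hkexe : k * ex * e <= e.
    rewrite -[X in _ <= X]mul1r; apply: ler_wpM2r => //; exact: ltW.
  rewrite (ger0_norm he) ler_norml; apply/andP; split.
    have -> : k * (e + rb * g) - e = k * e + k * (rb * g) - e by ring.
    have -> : - ((1 - k * j) * e) = k * j * e - e by ring.
    lra.
  have h2 : k * (e + rb * g) <= k * (ex * e) by rewrite ler_wpM2l // ltW.
  have -> : (1 - k * j) * e = e - k * j * e by ring.
  rewrite mulrA in h2.
  lra.
have h1 := hneg he.
have h2 : e + rb * g <= j * e.
  rewrite -[e + rb * g]mul1r -hj (mulrC ex) -mulrA; by apply: ler_wpM2l; [exact: ltW | exact: h1].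
have hge : 0 <= k * (rb * g) by rewrite mulr_ge0 // ?mulr_ge0 // ltW.
have hkj1 : 0 <= 1 - k * j by lra.
have hk1e : 0 <= (1 - k * j) * - e by rewrite mulr_ge0 //; lra.
have hke : 0 <= (1 - k) * - e by rewrite mulr_ge0 //; lra.
rewrite (ltr0_norm he) ler_norml; apply/andP; split.
  have -> : k * (e + rb * g) - e = (1 - k) * - e + k * (rb * g) by ring.
  lra.
have h3 : k * (e + rb * g) <= k * (j * e) by rewrite ler_wpM2l // ltW.
have -> : (1 - k * j) * - e = k * j * e - e by ring.
rewrite mulrA in h3.
lra.
Qed.
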